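(* Fix $\alpha,s,t\in\mathbb{C}$. Let $k$ be a positive integer, $a,b\in\mathbb{Z}$ and $u\in\mathbb{C}$. For any integers $c_0=a,c_1,\dots,c_{k-1},c_k=b$ with $|c_{i+1}-c_i|=1$ for $i=0,\dots,k-1$, consider the vector $$\Pi_{1\ldots k}\,\psi^{(1)}(u+k-1)^{c_0}_{c_1}\otimes\psi^{(1)}(u+k-2)^{c_1}_{c_2}\otimes\cdots\otimes\psi^{(1)}(u+1)^{c_{k-2}}_{c_{k-1}}\otimes\psi^{(1)}(u)^{c_{k-1}}_{c_k}\in(\mathbb{C}^2)^{\otimes k}.$$ This vector does not depend on the choice of $c_1,\dots,c_{k-1}$ (subject to the stated constraint).
   Context: $\mathbb{C}^2$ has basis $e_1,e_2$; vectors are written as columns of coordinates. For integers $l$ and $u\in\mathbb{C}$ define $\psi^{(1)}(u)^l_{l+1}=\begin{pmatrix}1\\ \alpha(u-l-t)\end{pmatrix}$, $\psi^{(1)}(u)^l_{l-1}=\begin{pmatrix}1\\ \alpha(u+l+s)\end{pmatrix}$, and $\psi^{(1)}(u)^a_b=0$ if $|a-b|\neq1$. $\Pi_{1\ldots k}$ is the symmetrizer on $(\mathbb{C}^2)^{\otimes k}$: $\Pi_{1\ldots k}\,e_{i_1}\otimes\cdots\otimes e_{i_k}=\frac{1}{k!}\sum_{\sigma\in S_k}e_{i_{\sigma(1)}}\otimes\cdots\otimes e_{i_{\sigma(k)}}$. *)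

(* Defs.v *)
From mathcomp Require Import all_boot all_algebra all_fingroup.
From mathcomp Require Import reals complex.
Set Implicit Arguments. Unset Strict Implicit. Unset Printing Implicit Defensive.
Import GRing.Theory Num.Theory.
Local Open Scope ring_scope.

Section Defs.
Variable R : realType.
Local Notation C := (R[i]).

(* A vector of C^2: coordinates indexed by 'I_2 (index 0 = e_1, index 1 = e_2). *)
Definition vec2 := 'I_2 -> C.
(* An element of (C^2)^{(x) k}: coordinates w.r.t. the basis
   e_{i_1} (x) ... (x) e_{i_k}, indexed by multi-indices i : {ffun 'I_k -> 'I_2}. *)
Definition tensor (k : nat) := {ffun 'I_k -> 'I_2} -> C.

Definition col2 (x y : C) : vec2 := fun i => if i == ord0 then x else y.

Definition psi1 (alpha s t u : C) (l m : int) : vec2 :=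
  if m == l + 1 then col2 1 (alpha * (u - l%:~R - t))
  else if m == l - 1 then col2 1 (alpha * (u + l%:~R + s))
  else fun _ => 0.

Definition tensorprod (k : nat) (v : 'I_k -> vec2) : tensor k :=
  fun i => \prod_(j < k) v j (i j).

Definition basis_tensor (k : nat) (i : {ffun 'I_k -> 'I_2}) : tensor k :=
  fun j => if j == i then 1 else 0.

Definition symmetrizer (k : nat) (T : tensor k) : tensor k :=
  fun j => \sum_(i : {ffun 'I_k -> 'I_2}) T i *
    ((k`!%:R)^-1 * \sum_(sigma : 'S_k)
        basis_tensor [ffun p => i (sigma p)] j).

Definition admissible_path (k : nat) (a b : int) (c : nat -> int) : Prop :=
  c 0%N = a /\ c k = b /\
  forall i : nat, (i < k)%N -> `|c i.+1 - c i| = 1.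

(* Pi_{1..k} psi(u+k-1)^{c0}_{c1} (x) psi(u+k-2)^{c1}_{c2} (x) ... (x) psi(u)^{c_{k-1}}_{c_k};
   factor number j (0-based) has spectral parameter u + (k-1-j). *)
Definition fused_vector (alpha s t u : C) (k : nat) (c : nat -> int) : tensor k :=
  symmetrizer (tensorprod (fun j : 'I_k =>
    psi1 alpha s t (u + (k.-1 - j)%:R) (c j) (c j.+1))).

End Defs.
Arguments fused_vector {R} alpha s t u k c _.

(* Main.v *)
Require Import Defs.
From mathcomp Require Import all_boot all_algebra all_fingroup.
From mathcomp Require Import reals complex.
From mathcomp Require Import ring zify.
From Stdlib Require Import FunctionalExtensionality.
Import GRing.Theory Num.Theory.
Local Open Scope ring_scope.

Section S.
Variable R : realType.
Local Notation C := (R[i]).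
Variables (alpha s t u : C).

Definition sv (p : C) (l l' : int) : C :=
  if l' == l + 1 then alpha * (p - l%:~R - t) else alpha * (p + l%:~R + s).

Definition xs (N : int) (c : nat -> int) (k : nat) : seq C :=
  [seq sv (u + (N - j%:Z)%:~R) (c j) (c j.+1) | j <- iota 0 k].

Definition canon (N a : int) (nu nd : nat) : seq C :=
  [seq alpha * (u + (N - a - 2 * m%:Z)%:~R - t) | m <- iota 0 nu] ++
  [seq alpha * (u + (N + a - 2 * m%:Z)%:~R + s) | m <- iota 0 nd].

Lemma iotaS0 (n : nat) : iota 0 n.+1 = 0%N :: map S (iota 0 n).
Proof. by rewrite /= (iotaDl 1 0 n). Qed.

Lemma xsS N c k : xs N c k.+1 = sv (u + N%:~R) (c 0%N) (c 1%N) :: xs (N - 1) (fun n => c n.+1) k.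
Proof.
rewrite /xs iotaS0 /= subr0; congr (_ :: _).
rewrite -map_comp; apply: eq_map => j /=.
congr (sv (u + _%:~R) _ _); lia.
Qed.

Lemma main_lem k : forall N (c : nat -> int),
  (forall i, (i < k)%N -> `|c i.+1 - c i| = 1) ->
  exists nu nd : nat, (nu + nd = k)%N /\ c k = c 0%N + nu%:Z - nd%:Z /\
     perm_eq (xs N c k) (canon N (c 0%N) nu nd).
Proof.
elim: k => [|k IH] N c Hc.
  by exists 0%N, 0%N; split => //; split => //; rewrite addr0 subr0.
have [nu [nd [H1 [H2 H3]]]] := IH (N - 1) (fun n => c n.+1)
   (fun i hi => Hc i.+1 hi).
have Hc0 := Hc 0%N isT.
have [E|E] : c 1%N = c 0%N + 1 \/ c 1%N = c 0%N - 1.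
  move: Hc0; case: (ltrP 0 (c 1%N - c 0%N)) => h.
    rewrite gtr0_norm // => e; left; rewrite -e; ring.
  rewrite ler0_norm // => e; right. have -> : c 1%N = c 0%N - (- (c 1%N - c 0%N)) by ring.
  by rewrite e.
- exists nu.+1, nd; split; first by lia.
  split; first by rewrite H2 E; lia.
  rewrite xsS.
  have -> : canon N (c 0%N) nu.+1 nd = sv (u + N%:~R) (c 0%N) (c 1%N) :: canon (N - 1) (c 1%N) nu nd.
    rewrite /canon /sv E eqxx iotaS0 /= -map_comp; congr (_ :: _ ++ _).
    - by rewrite (_ : N - c 0%N - 2 * 0%Z = N - c 0%N); [rewrite intrB addrA | lia].
    - apply/eq_in_map => m _ /=; congr (alpha * (u + _%:~R - t)); lia.
    - apply/eq_in_map => m _ /=; congr (alpha * (u + _%:~R + s)); lia.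
  by rewrite perm_cons.
- exists nu, nd.+1; split; first by lia.
  split; first by rewrite H2 E; lia.
  rewrite xsS.
  have -> : canon N (c 0%N) nu nd.+1 = [seq alpha * (u + (N - c 0%N - 2 * m%:Z)%:~R - t) | m <- iota 0 nu] ++ sv (u + N%:~R) (c 0%N) (c 1%N) :: [seq alpha * (u + (N + c 0%N - 2 * m.+1%:Z)%:~R + s) | m <- iota 0 nd].
    rewrite /canon /sv E iotaS0 /= -map_comp.
    have -> : (c 0%N - 1 == c 0%N + 1) = false by apply/negbTE; rewrite eq_sym -subr_eq0; apply/eqP; lia.
    by rewrite (_ : N + c 0%N - 2 * 0%Z = N + c 0%N); [rewrite intrD addrA | lia].
  apply: (@perm_trans _ (sv (u + N%:~R) (c 0%N) (c 1%N) :: canon (N - 1) (c 1%N) nu nd)); first by rewrite perm_cons.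
  rewrite /canon E.
  have -> : [seq alpha * (u + (N - 1 - (c 0%N - 1) - 2 * m%:Z)%:~R - t) | m <- iota 0 nu] = [seq alpha * (u + (N - c 0%N - 2 * m%:Z)%:~R - t) | m <- iota 0 nu].
    apply/eq_in_map => m _ /=; congr (alpha * (u + _%:~R - t)); lia.
  have -> : [seq alpha * (u + (N - 1 + (c 0%N - 1) - 2 * m%:Z)%:~R + s) | m <- iota 0 nd] = [seq alpha * (u + (N + c 0%N - 2 * m.+1%:Z)%:~R + s) | m <- iota 0 nd].
    apply/eq_in_map => m _ /=; congr (alpha * (u + _%:~R + s)); lia.
  by rewrite -cat1s perm_catCA.
Qed.


Lemma sym_formula k (v : 'I_k -> vec2 R) (j : {ffun 'I_k -> 'I_2}) :
  symmetrizer (tensorprod v) j =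
  (k`!%:R)^-1 * \sum_(sg : 'S_k) \prod_(q < k) v (sg q) (j q).
Proof.
rewrite /symmetrizer.
under eq_bigr => i _ do rewrite mulrCA mulr_sumr.
rewrite -mulr_sumr exchange_big /=; congr (_ * _); apply: eq_bigr => sg _.
rewrite (bigD1 [ffun p => j ((sg^-1)%g p)]) //= big1 ?addr0; last first.
  move=> i hi; rewrite /basis_tensor.
  case: eqP => [e|]; last by rewrite !mulr0.
  move: hi; suff -> : i = [ffun p => j ((sg^-1)%g p)] by rewrite eqxx.
  by apply/ffunP => p; rewrite ffunE e ffunE permKV.
rewrite /basis_tensor.
have -> : (j == [ffun p => [ffun p0 => j ((sg^-1)%g p0)] (sg p)]) = true.
  by apply/eqP/ffunP => p; rewrite !ffunE permK.
rewrite mulr1.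
rewrite /tensorprod (reindex_inj (@perm_inj _ sg)) /=.
by apply: eq_bigr => q _; rewrite ffunE permK.
Qed.

Lemma sym_perm k (v : 'I_k -> vec2 R) (tau : 'S_k) j :
  symmetrizer (tensorprod (fun q => v (tau q))) j = symmetrizer (tensorprod v) j.
Proof.
rewrite !sym_formula; congr (_ * _).
rewrite [RHS](reindex_inj (@mulIg _ tau)) /=.
by apply: eq_bigr => sg _; apply: eq_bigr => q _; rewrite permM.
Qed.

Lemma sym_ext k (v w : 'I_k -> vec2 R) j :
  (forall q x, v q x = w q x) ->
  symmetrizer (tensorprod v) j = symmetrizer (tensorprod w) j.
Proof.
move=> h; rewrite !sym_formula; congr (_ * _).
by apply: eq_bigr => sg _; apply: eq_bigr => q _; rewrite h.
Qed.


Lemma psi_sv p l m : `|m - l| = 1 -> psi1 alpha s t p l m = col2 1 (sv p l m).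
Proof.
move=> h; rewrite /psi1 /sv.
have [E|E] : m = l + 1 \/ m = l - 1.
  move: h; case: (ltrP 0 (m - l)) => h.
    rewrite gtr0_norm // => e; left; rewrite -e; ring.
  rewrite ler0_norm // => e; right. have -> : m = l - (- (m - l)) by ring.
  by rewrite e.
- by rewrite E eqxx.
- have -> : (m == l + 1) = false by apply/negbTE; rewrite E -subr_eq0; apply/eqP; lia.
  by rewrite E eqxx.
Qed.

Lemma fv_eq k (c : nat -> int) (hk : (0 < k)%N) (hc : forall i, (i < k)%N -> `|c i.+1 - c i| = 1) (q : 'I_k) :
  psi1 alpha s t (u + (k.-1 - q)%:R) (c q) (c q.+1) = col2 1 (nth 0 (xs (k.-1)%:Z c k) q).
Proof.
rewrite /xs (nth_map 0%N) ?size_iota // nth_iota // add0n psi_sv ?hc //.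
rewrite subzn; last by have := ltn_ord q; lia.
by rewrite -pmulrn.
Qed.

End S.

Theorem proposition4 (R : realType) (alpha s t : R[i]) (k : nat) (a b : int)
    (u : R[i]) (c c' : nat -> int) :
  (0 < k)%N ->
  admissible_path k a b c -> admissible_path k a b c' ->
  fused_vector alpha s t u k c = fused_vector alpha s t u k c'.
Proof.
move=> hk [c0 [ck hc]] [c0' [ck' hc']].
have [nu [nd [h1 [h2 h3]]]] := @main_lem R alpha s t u k (k.-1)%:Z c hc.
have [nu' [nd' [h1' [h2' h3']]]] := @main_lem R alpha s t u k (k.-1)%:Z c' hc'.
have enu : nu = nu' by move: h2 h2'; rewrite c0 c0' ck ck'; lia.
have end_ : nd = nd' by lia.
subst nu' nd'.
rewrite c0 in h3; rewrite c0' in h3'.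
have hp : perm_eq (xs R alpha s t u (k.-1)%:Z c' k) (xs R alpha s t u (k.-1)%:Z c k).
  by apply: perm_trans h3' _; rewrite perm_sym.
set X := xs R alpha s t u (k.-1)%:Z c k in hp *.
have sX : size X == k by rewrite /X /xs size_map size_iota.
have /tuple_permP [p Hp] : perm_eq (xs R alpha s t u (k.-1)%:Z c' k) (Tuple sX) by [].
apply: functional_extensionality_dep => j0.
rewrite /fused_vector.
rewrite (@sym_ext R k _ (fun q => col2 1 (nth 0 X q))); last first.
  by move=> q x; rewrite fv_eq.
rewrite [RHS](@sym_ext R k _ (fun q => (fun q' => col2 1 (nth 0 X q')) (p q))); last first.
  move=> q x; rewrite fv_eq // Hp -(tnth_nth 0) tnth_mktuple.
  by rewrite (tnth_nth 0).
by rewrite (@sym_perm R k (fun q => col2 1 X`_q)).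

Qed.
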